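(* Under the hypotheses and notation below, the coefficients of $p_\lambda=\sum_{\ell=1}^n c_{\lambda\lambda^{(\ell)}}m_{\lambda^{(\ell)}}$ are $$c_{\lambda\lambda^{(\ell)}}=\sum_{\substack{\ell=j_r<j_{r-1}<\cdots<j_1<j_0=n\\ r=1,\dots,n-\ell}}\frac{d_{\lambda^{(j_0)}\lambda^{(j_1)}}d_{\lambda^{(j_1)}\lambda^{(j_2)}}\cdots d_{\lambda^{(j_{r-1})}\lambda^{(j_r)}}}{(\epsilon_\lambda-\epsilon_{\lambda^{(j_1)}})\cdots(\epsilon_\lambda-\epsilon_{\lambda^{(j_r)}})},$$ with the convention that the empty sum (case $\ell=n$) equals $1$, so $c_{\lambda\lambda}=1$.
   Context: Setting: $E$ real Euclidean space spanned by an irreducible root system $R$, Weyl group $W$, positive roots $R^+$, $\mathcal{Q}^+=\mathrm{Span}_{\mathbb{N}}(R^+)$, weight lattice $\mathcal{P}$, dominant weights $\mathcal{P}^+$, partial order $\lambda\succeq\mu$ iff $\lambda-\mu\in\mathcal{Q}^+$. $\mathcal{A}^W$ is the space of $W$-invariants in the group algebra of $\mathcal{P}$ (formal exponentials $e^\lambda$), with basis $m_\lambda=\sum_{\mu\in W(\lambda)}e^\mu$, $\lambda\in\mathcal{P}^+$; $\mathcal{A}^W_\lambda=\mathrm{Span}\{m_\mu\mid\mu\in\mathcal{P}^+,\mu\preceq\lambda\}$. $D:\mathcal{A}^W\to\mathcal{A}^W$ is linear with $D(\mathcal{A}^W_\lambda)\subseteq\mathcal{A}^W_\lambda$ for all dominant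 $\lambda$; $\{s_\lambda\}$ is a basis with $m_\lambda=\sum_{\mu\preceq\lambda}a_{\lambda\mu}s_\mu$, $a_{\lambda\lambda}=1$, and $Dm_\lambda=\sum_{\mu\preceq\lambda}b_{\lambda\mu}s_\mu$, $b_{\lambda\lambda}=\epsilon_\lambda$ (sums over dominant $\mu$); $D$ is regular: $\epsilon_\mu\ne\epsilon_\lambda$ whenever $\mu\prec\lambda$ are dominant. $p_\lambda$ is the unique element of $\mathcal{A}^W$ with $Dp_\lambda=\epsilon_\lambda p_\lambda$ and $p_\lambda=m_\lambda+\sum_{\mu\prec\lambda}c_{\lambda\mu}m_\mu$. For fixed dominant $\lambda$, $\lambda^{(1)},\dots,\lambda^{(n)}=\lambda$ enumerates $\{\mu\in\mathcal{P}^+\mid\mu\preceq\lambda\}$ with $\lambda^{(i)}\prec\lambda^{(j)}\Rightarrow i<j$, and $d_{\lambda^{(j)}\lambda^{(k)}}=b_{\lambda^{(j)}\lambda^{(k)}}-\epsilon_\lambda a_{\lambda^{(j)}\lambda^{(k)}}$ for $j>k$. *)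

(* Defs.v *)
From HB Require Import structures.
From mathcomp Require Import all_boot all_order all_algebra.
From mathcomp Require Import reals.
Set Implicit Arguments. Unset Strict Implicit. Unset Printing Implicit Defensive.
Import Order.TTheory GRing.Theory Num.Theory.
Local Open Scope ring_scope.

Section RootSystem.
Variables (R : realType) (r : nat).
Implicit Types (u v lam mu al be xi : 'rV[R]_r) (Phi : seq 'rV[R]_r).

Definition dotp u v : R := (u *m v^T) 0 0.

Definition cpair be al : R := 2 * dotp be al / dotp al al.

Definition refl al be : 'rV[R]_r := be - cpair be al *: al.

Definition is_int (x : R) : Prop := exists z : int, x = z%:~R.

(** (crystallographic, not necessarily reduced) root system spanning E *)
Record root_system Phi : Prop := {
  rs_uniq : uniq Phi;
  rs_nz : 0 \notin Phi;
  rs_span : forall v, exists k : 'I_(size Phi) -> R,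
      v = \sum_(i < size Phi) k i *: Phi`_i;
  rs_refl : forall al be, al \in Phi -> be \in Phi -> refl al be \in Phi;
  rs_int : forall al be, al \in Phi -> be \in Phi -> is_int (cpair be al) }.

Definition irreducible_root_system Phi : Prop :=
  [/\ root_system Phi, Phi != [::] &
      forall P : pred 'rV[R]_r,
        (forall al be, al \in Phi -> be \in Phi -> P al -> ~~ P be ->
           dotp al be = 0) ->
        all P Phi \/ all (predC P) Phi].

Definition regular_vector Phi xi : Prop :=
  forall al, al \in Phi -> dotp al xi != 0.
Definition positive_root Phi xi al : bool := (al \in Phi) && (0 < dotp al xi).

Definition weight Phi lam : Prop :=
  forall al, al \in Phi -> is_int (cpair lam al).
Definition dominant Phi xi lam : Prop :=
  weight Phi lam /\ forall al, positive_root Phi xi al -> 0 <= dotp lam al.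

Definition wle Phi xi mu lam : Prop :=
  exists k : 'I_(size Phi) -> nat,
    lam - mu = \sum_(i < size Phi | positive_root Phi xi Phi`_i) (k i)%:R *: Phi`_i.
Definition wlt Phi xi mu lam : Prop := wle Phi xi mu lam /\ mu <> lam.

Definition lower_enum Phi xi lam (rs : seq 'rV[R]_r) : Prop :=
  uniq rs /\ forall mu, mu \in rs <-> (dominant Phi xi mu /\ wle Phi xi mu lam).

Definition dominant_basis (F : fieldType) (V : lmodType F) Phi xi
    (f : 'rV[R]_r -> V) : Prop :=
  (forall (rs : seq 'rV[R]_r) (k : 'rV[R]_r -> F), uniq rs ->
     (forall mu, mu \in rs -> dominant Phi xi mu) ->
     \sum_(mu <- rs) k mu *: f mu = 0 -> forall mu, mu \in rs -> k mu = 0)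
  /\ (forall v : V, exists (rs : seq 'rV[R]_r) (k : 'rV[R]_r -> F),
     (forall mu, mu \in rs -> dominant Phi xi mu) /\
     v = \sum_(mu <- rs) k mu *: f mu).

End RootSystem.

Section Formula.
Variables (F : fieldType) (n : nat).

(** for a chain top = j_0 > j_1 > ... > j_r listed as top :: rest,
    prod_i dd j_{i-1} j_i / den j_i *)
Definition chain_term (dd : 'I_n.+1 -> 'I_n.+1 -> F) (den : 'I_n.+1 -> F)
    (top : 'I_n.+1) (rest : seq 'I_n.+1) : F :=
  \prod_(t <- pairmap (fun x y => dd x y / den y) top rest) t.

(** sum over all chains  l = j_r < ... < j_1 < j_0 = top (top = ord_max),
    i.e. over all sets S of intermediate indices; empty sum convention = 1
    when l = top *)
Definition cformula (dd : 'I_n.+1 -> 'I_n.+1 -> F) (den : 'I_n.+1 -> F)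
    (l : 'I_n.+1) : F :=
  if l == ord_max then 1 else
  \sum_(S : {set 'I_n.+1} | S \subset [set k : 'I_n.+1 | (l < k < @ord_max n)%N])
     chain_term dd den ord_max
       (sort (fun x y : 'I_n.+1 => (y <= x)%N) (enum (l |: S))).

End Formula.

(* Main.v *)
Require Import Defs.
From HB Require Import structures.
From mathcomp Require Import all_boot all_order all_algebra.
From mathcomp Require Import reals.
From mathcomp Require Import zify boolp.
Import Order.TTheory GRing.Theory Num.Theory.
Local Open Scope ring_scope.

Section Comb.
Variables (F : fieldType) (n : nat) (dd : 'I_n.+1 -> 'I_n.+1 -> F) (den : 'I_n.+1 -> F).
Local Notation desc := (fun x y : 'I_n.+1 => (y <= x)%N).
Local Notation sq S := (sort (fun x y : 'I_n.+1 => (y <= x)%N) (enum S)).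

Lemma desc_trans : transitive desc.
Proof. by move=> y x z /= H1 H2; apply: leq_trans H2 H1. Qed.
Lemma desc_anti : antisymmetric desc.
Proof. by move=> x y /= H; apply/val_inj/anti_leq; rewrite andbC. Qed.
Lemma desc_total : total desc.
Proof. by move=> x y /=; apply: leq_total. Qed.

Lemma last_min (s : seq 'I_n.+1) y x : sorted desc s -> x \in s -> (last y s <= x)%N.
Proof.
elim: s y => [//|a s IH] y /= Hp; rewrite inE => /orP [/eqP->|Hx].
  have /allP H := order_path_min desc_trans Hp.
  have : last a s \in a :: s := mem_last a s.
  by rewrite inE => /orP [/eqP->//| /H].
exact: IH (path_sorted Hp) Hx.
Qed.

Lemma sq_cons (l : 'I_n.+1) (T : {set 'I_n.+1}) :
  (forall k, k \in T -> (l < k)%N) -> sq (l |: T) = sq T ++ [:: l].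
Proof.
move=> HT.
apply: (sorted_eq desc_trans desc_anti).
- exact: (sort_sorted desc_total).
- have Hs := sort_sorted desc_total (enum T).
  case E: (sq T) Hs => [|x s] //= Hs.
  rewrite cat_path Hs /= andbT.
  have : last x s \in sq T by rewrite E mem_last.
  by rewrite mem_sort mem_enum => /HT /ltnW.
- rewrite perm_sort; apply: uniq_perm.
  + exact: enum_uniq.
  + rewrite cat_uniq sort_uniq enum_uniq /= andbT orbF mem_sort mem_enum.
    by apply/negP => /HT; rewrite ltnn.
  + move=> x; rewrite mem_enum mem_cat mem_sort mem_enum !inE orbC.
    done.
Qed.

Lemma chain_snoc top s l :
  chain_term dd den top (s ++ [:: l]) = chain_term dd den top s * (dd (last top s) l / den l).
Proof. by rewrite /chain_term pairmap_cat big_cat big_seq1. Qed.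

Lemma cformula_rec (l : 'I_n.+1) : l != ord_max ->
  cformula dd den l = \sum_(j : 'I_n.+1 | (l < j)%N) cformula dd den j * (dd j l / den l).
Proof.
rewrite /cformula => Hl; rewrite (negbTE Hl).
have Hln : (l < n)%N.
  by have := ltn_ord l; rewrite ltnS leq_eqVlt => /orP [/eqP Hv|//]; case/eqP: Hl; apply: val_inj.
transitivity (\sum_(S : {set 'I_n.+1} | S \subset [set k : 'I_n.+1 | (l < k < @ord_max n)%N])
   chain_term dd den ord_max (sq S) * (dd (last ord_max (sq S)) l / den l)).
  apply: eq_bigr => S HS; rewrite sq_cons ?chain_snoc //.
  by move=> k /(subsetP HS); rewrite inE => /andP[].
rewrite (partition_big (fun S : {set 'I_n.+1} => last ord_max (sq S)) (fun j : 'I_n.+1 => (l < j)%N)); last first.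
  move=> S HS; have := mem_last ord_max (sq S); rewrite inE => /orP [/eqP->//|].
  by rewrite mem_sort mem_enum => /(subsetP HS); rewrite inE => /andP[].
apply: eq_bigr => j Hlj.
transitivity (\sum_(S : {set 'I_n.+1} | (S \subset [set k : 'I_n.+1 | (l < k < @ord_max n)%N])
   && (last ord_max (sq S) == j)) chain_term dd den ord_max (sq S) * (dd j l / den l)).
  by apply: eq_bigr => S /andP[_ /eqP->].
rewrite -big_distrl /=; congr (_ * _).
case: (eqVneq j ord_max) => [->|Hj]; rewrite ?eqxx ?(negbTE Hj).
  rewrite (bigD1 set0) /=; last by rewrite sub0set enum_set0 /=.
  rewrite enum_set0 /= /chain_term big_nil big1 ?addr0 //.
  move=> S /andP[/andP[HS /eqP Hlast] HS0].
  case/set0Pn: HS0 => k Hk.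
  have := @last_min _ ord_max k (sort_sorted desc_total (enum S)).
  rewrite mem_sort mem_enum => /(_ Hk); rewrite Hlast.
  have := subsetP HS k Hk; rewrite inE => /andP[_ Hk2] Hk3.
  by move: Hk3; rewrite leqNgt /= Hk2.
have Hjm : (j < n)%N.
  by have := ltn_ord j; rewrite ltnS leq_eqVlt => /orP [/eqP Hv|//]; case/eqP: Hj; apply: val_inj.
rewrite (reindex_onto (fun S' => j |: S') (fun S => S :\ j)) /=; last first.
  move=> S /andP[_ /eqP Hlast]; apply: setD1K.
  have := mem_last ord_max (sq S); rewrite Hlast inE => /orP [/eqP Hv|].
    by rewrite Hv eqxx in Hj.
  by rewrite mem_sort mem_enum.
apply: eq_bigl => S'; apply/idP/idP.
  case/andP => /andP[Hsub /eqP Hlast] /eqP Heq.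
  apply/subsetP => k Hk; rewrite inE.
  have Hk' : k \in j |: S' by rewrite setU1r.
  have := subsetP Hsub k Hk'; rewrite inE => /andP[_ ->]; rewrite andbT.
  have Hkj : k != j.
    apply/eqP => Ekj; move: Hk; rewrite -Heq Ekj; by rewrite setD11.
  have := @last_min _ ord_max k (sort_sorted desc_total (enum (j |: S'))).
  rewrite mem_sort mem_enum => /(_ Hk'); rewrite Hlast => Hjk.
  by rewrite ltn_neqAle Hjk andbT eq_sym.
move=> Hsub.
have Hgt : forall k, k \in S' -> (j < k)%N.
  by move=> k /(subsetP Hsub); rewrite inE => /andP[].
have HjS : j \notin S' by apply/negP => /Hgt; rewrite ltnn.
rewrite sq_cons // last_cat /= eqxx setU1K // eqxx !andbT.
apply/subsetP => k; rewrite !inE => /orP [/eqP->|Hk].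
  by rewrite Hlj Hjm.
have := subsetP Hsub k Hk; rewrite inE => /andP[H1 ->]; rewrite andbT.
exact: ltn_trans Hlj H1.
Qed.

Lemma chain_solve (c : 'I_n.+1 -> F) : c ord_max = 1 ->
  (forall l, l != ord_max -> den l != 0) ->
  (forall l, l != ord_max -> c l * den l = \sum_(j : 'I_n.+1 | (l < j)%N) c j * dd j l) ->
  forall l, c l = cformula dd den l.
Proof.
move=> Hmax Hden Hrec.
suff H : forall k (l : 'I_n.+1), (n - l < k)%N -> c l = cformula dd den l.
  by move=> l; apply: (H (n - l).+1).
elim=> [//|k IH] l Hl.
case: (eqVneq l ord_max) => [->|Hlm]; first by rewrite Hmax /cformula eqxx.
rewrite cformula_rec //; apply: (mulIf (Hden l Hlm)); rewrite Hrec // big_distrl /=.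
apply: eq_bigr => j Hj; rewrite -mulrA divfK ?Hden // (IH j) //.
have := ltn_ord j; lia.
Qed.
End Comb.

Lemma wle_trans (R : realType) (r : nat) (Phi : seq 'rV[R]_r) xi (u v w : 'rV[R]_r) :
  wle Phi xi u v -> wle Phi xi v w -> wle Phi xi u w.
Proof.
case=> k1 H1 [k2 H2]; exists (fun i => k2 i + k1 i)%N.
have -> : w - u = (w - v) + (v - u) by rewrite addrA subrK.
rewrite H1 H2 -big_split /=; apply: eq_bigr => i _; by rewrite natrD scalerDl.
Qed.
Arguments wle_trans {R r Phi xi u v w}.

Theorem mainTheorem3
  (R : realType) (r : nat) (Phi : seq 'rV[R]_r) (xi : 'rV[R]_r)
  (F : fieldType) (V : lmodType F) (D : {linear V -> V})
  (m s : 'rV[R]_r -> V) (a b : 'rV[R]_r -> 'rV[R]_r -> F) (eps : 'rV[R]_r -> F)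
  (lam : 'rV[R]_r) (n : nat) (e : 'I_n.+1 -> 'rV[R]_r)
  (p : V) (c : 'rV[R]_r -> F) :
  irreducible_root_system Phi ->
  regular_vector Phi xi ->
  (* m_mu and s_mu (mu dominant) are bases of A^W *)
  @dominant_basis R r F V Phi xi m ->
  @dominant_basis R r F V Phi xi s ->
  (* m_l = sum_{mu <= l} a_{l mu} s_mu,  a_{ll} = 1 *)
  (forall l, dominant Phi xi l -> forall rs, lower_enum Phi xi l rs ->
     m l = \sum_(mu <- rs) a l mu *: s mu) ->
  (forall l, dominant Phi xi l -> a l l = 1) ->
  (* D m_l = sum_{mu <= l} b_{l mu} s_mu,  b_{ll} = eps_l *)
  (forall l, dominant Phi xi l -> forall rs, lower_enum Phi xi l rs ->
     D (m l) = \sum_(mu <- rs) b l mu *: s mu) ->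
  (forall l, dominant Phi xi l -> b l l = eps l) ->
  (* a_{l mu}, b_{l mu} are coefficients, hence vanish unless mu <= l *)
  (forall l mu, dominant Phi xi l -> dominant Phi xi mu -> ~ wle Phi xi mu l ->
     a l mu = 0 /\ b l mu = 0) ->
  (* D is regular *)
  (forall l mu, dominant Phi xi l -> dominant Phi xi mu -> wlt Phi xi mu l ->
     eps mu != eps l) ->
  dominant Phi xi lam ->
  (* lambda^(1..n+1) (indices 0..n here) enumerates {mu dominant | mu <= lam} *)
  injective e ->
  (forall j, dominant Phi xi (e j) /\ wle Phi xi (e j) lam) ->
  (forall mu, dominant Phi xi mu -> wle Phi xi mu lam -> exists j, e j = mu) ->
  (forall i j, wlt Phi xi (e i) (e j) -> (i < j)%N) ->
  e ord_max = lam ->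
  (* p_lam : D p = eps_lam p,  p = m_lam + sum_{mu < lam} c_{lam mu} m_mu *)
  D p = eps lam *: p ->
  c lam = 1 ->
  p = \sum_(j < n.+1) c (e j) *: m (e j) ->
  forall l : 'I_n.+1,
    c (e l) = cformula
      (fun j k => b (e j) (e k) - eps lam * a (e j) (e k))
      (fun k => eps lam - eps (e k)) l.
Proof.
move=> _ _ [mind _] [sind _] Hm Ha1 HD Hb1 Hab Hreg Hlam einj He Hsurj Hord Hmax Dp Hc1 Hp.
have Hexp : forall j, m (e j) = \sum_(i < n.+1) a (e j) (e i) *: s (e i) /\
                      D (m (e j)) = \sum_(i < n.+1) b (e j) (e i) *: s (e i).
  move=> j.
  pose P := fun i : 'I_n.+1 => `[< wle Phi xi (e i) (e j) >].
  pose rs := [seq e i | i <- [seq i <- enum 'I_n.+1 | P i]].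
  have Hrs : lower_enum Phi xi (e j) rs.
    split; first by rewrite map_inj_uniq // filter_uniq // enum_uniq.
    move=> mu; split.
      case/mapP => i; rewrite mem_filter => /andP[/asboolP Hw _] ->.
      by split; [exact: (He i).1 | exact: Hw].
    case=> Hd Hw; have [i Ei] := Hsurj mu Hd (wle_trans Hw (He j).2).
    apply/mapP; exists i => //; rewrite mem_filter mem_enum andbT; apply/asboolP.
    by rewrite Ei.
  have Hsum : forall f : 'rV[R]_r -> F,
      (forall i, ~ wle Phi xi (e i) (e j) -> f (e i) = 0) ->
      \sum_(mu <- rs) f mu *: s mu = \sum_(i < n.+1) f (e i) *: s (e i).
    move=> f Hf; rewrite big_map big_filter big_mkcond big_enum /=.
    rewrite big_mkcond; apply: eq_bigr => i _; rewrite /P; case: (asboolP (wle Phi xi (e i) (e j))) => // Hn.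
    by rewrite Hf // scale0r.
  split.
    rewrite (Hm _ (He j).1 _ Hrs) Hsum // => i Hn.
    exact: (Hab _ _ (He j).1 (He i).1 Hn).1.
  rewrite (HD _ (He j).1 _ Hrs) Hsum // => i Hn.
  exact: (Hab _ _ (He j).1 (He i).1 Hn).2.
pose K := fun mu => \sum_(j < n.+1) c (e j) * (b (e j) mu - eps lam * a (e j) mu).
have HK : \sum_(i < n.+1) K (e i) *: s (e i) = 0.
  apply: (@eq_trans _ _ (D p - eps lam *: p)); last by rewrite Dp subrr.
  rewrite Hp linear_sum scaler_sumr -sumrB.
  under eq_bigr do rewrite scaler_suml.
  rewrite exchange_big /=; apply: eq_bigr => j _.
  rewrite linearZ /= (Hexp j).2 (Hexp j).1 !scaler_sumr -sumrB.
  apply: eq_bigr => i _; rewrite !scalerA -scalerBl; congr (_ *: _).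
  by rewrite mulrBr mulrA [c _ * eps _]mulrC.
have Hzero : forall i, K (e i) = 0.
  move=> i; apply: (sind (map e (enum 'I_n.+1)) K).
  - by rewrite map_inj_uniq // enum_uniq.
  - by move=> mu /mapP [k _ ->]; exact: (He k).1.
  - rewrite -[RHS]HK big_map big_enum /=; exact: eq_bigl.
  - by apply/mapP; exists i; rewrite ?mem_enum.
apply: (@chain_solve _ _ _ _ (fun j => c (e j))).
- by rewrite Hmax.
- move=> k Hk; rewrite subr_eq0 eq_sym; apply: Hreg => //; first exact: (He k).1.
  split; first exact: (He k).2.
  by move=> E; move: Hk; rewrite -Hmax in E; rewrite (einj _ _ E) eqxx.
- move=> k Hk; have := Hzero k; rewrite /K (bigD1 k) //=.
  rewrite (bigID (fun j : 'I_n.+1 => (k < j)%N)) /=.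
  rewrite [X in _ + (_ + X)]big1; last first.
    move=> j /andP[Hjk Hkj].
    have Hn : ~ wle Phi xi (e k) (e j).
      move=> Hw; have : (k < j)%N.
        apply: Hord; split => // E; move/eqP: Hjk; apply; exact/esym/einj.
      by rewrite (negbTE Hkj).
    have [-> ->] := Hab _ _ (He j).1 (He k).1 Hn.
    by rewrite mulr0 subr0 mulr0.
  rewrite addr0 (Ha1 _ (He k).1) (Hb1 _ (He k).1) mulr1.
  rewrite (eq_bigl (fun j : 'I_n.+1 => (k < j)%N)); last first.
    move=> j; rewrite andb_idl // => H; apply/eqP => E; by rewrite E ltnn in H.
  move/eqP; rewrite addrC addr_eq0 => /eqP ->.
  by rewrite -mulrN opprB.
Qed.
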